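(* Let $\Lambda$ be a finite-dimensional algebra over an algebraically closed field $k$ and let $M_1,M_2$ be non-isomorphic finitely generated $\Lambda$-modules that are bricks, i.e. $\mathrm{End}_\Lambda(M_i)\simeq k$ for $i=1,2$. Then $\mathrm{End}_\Lambda(M_1\oplus M_2)$ is symmetric if and only if $\mathrm{Hom}_\Lambda(M_1,M_2)=\mathrm{Hom}_\Lambda(M_2,M_1)=0$.
   Context: Symmetric: the algebra is isomorphic to its $k$-dual as a bimodule. *)

(* Defs.v *)
From HB Require Import structures.
From mathcomp Require Import all_boot all_algebra all_field.
Set Implicit Arguments. Unset Strict Implicit. Unset Printing Implicit Defensive.
Import GRing.Theory.
Local Open Scope ring_scope.

(* A finitely generated (= finite-dimensional) left Lambda-module of
   K-dimension m is given by a representation rho : A -> 'M[K]_m acting on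
   column vectors:  a . v = rho a *m v. *)

Section Defs.
Variables (K : fieldType) (A : falgType K).

Definition is_rep (m : nat) (rho : A -> 'M[K]_m) : Prop :=
  [/\ forall (c : K) (a b : A), rho (c *: a + b) = c *: rho a + rho b,
      rho 1 = 1%:M &
      forall a b : A, rho (a * b) = rho a *m rho b].

Definition is_hom (m1 m2 : nat) (rho1 : A -> 'M[K]_m1) (rho2 : A -> 'M[K]_m2)
  (f : 'M[K]_(m2, m1)) : Prop :=
  forall a : A, f *m rho1 a = rho2 a *m f.

Definition mod_iso (m1 m2 : nat) (rho1 : A -> 'M[K]_m1) (rho2 : A -> 'M[K]_m2)
  : Prop :=
  exists (f : 'M[K]_(m2, m1)) (g : 'M[K]_(m1, m2)),
    [/\ is_hom rho1 rho2 f, is_hom rho2 rho1 g, f *m g = 1%:M & g *m f = 1%:M].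

Definition brick (m : nat) (rho : A -> 'M[K]_m) : Prop :=
  (0 < m)%N /\ forall f : 'M[K]_m, is_hom rho rho f -> exists c : K, f = c%:M.

Definition dsum_rep (m1 m2 : nat) (rho1 : A -> 'M[K]_m1) (rho2 : A -> 'M[K]_m2)
  : A -> 'M[K]_(m1 + m2) :=
  fun a => block_mx (rho1 a) 0 0 (rho2 a).

End Defs.

(* A K-algebra E, given as a subalgebra (predicate) of 'M[K]_n, is symmetric:
   E is isomorphic to its K-dual D(E) = Hom_K(E, K) as an E-E-bimodule, where
   (a . f . b)(y) = f (b y a).  The isomorphism is x |-> phi x. *)
Definition symmetric_alg (K : fieldType) (n : nat) (E : 'M[K]_n -> Prop) : Prop :=
  exists phi : 'M[K]_n -> 'M[K]_n -> K,
  [/\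
      (forall x, E x -> forall (c : K) y z, E y -> E z ->
          phi x (c *: y + z) = c * phi x y + phi x z),
      (forall (c : K) x y, E x -> E y -> forall z, E z ->
          phi (c *: x + y) z = c * phi x z + phi y z),
      (forall a x b y, E a -> E x -> E b -> E y ->
          phi (a *m x *m b) y = phi x (b *m y *m a)),
      (forall x, E x -> (forall y, E y -> phi x y = 0) -> x = 0) &
      (forall f : 'M[K]_n -> K,
          (forall (c : K) y z, E y -> E z -> f (c *: y + z) = c * f y + f z) ->
          exists2 x, E x & forall y, E y -> phi x y = f y)].

(* Main.v *)
Require Import Defs.
From HB Require Import structures.
From mathcomp Require Import all_boot all_algebra all_field.
From mathcomp Require Import ring.
Set Implicit Arguments. Unset Strict Implicit. Unset Printing Implicit Defensive.
Import GRing.Theory.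
Local Open Scope ring_scope.

Section Aux.
Variables (K : fieldType) (A : falgType K).

Lemma hom_comp m1 m2 m3 (r1 : A -> 'M[K]_m1) (r2 : A -> 'M[K]_m2) (r3 : A -> 'M[K]_m3)
  (f : 'M[K]_(m3, m2)) (g : 'M[K]_(m2, m1)) :
  is_hom r2 r3 f -> is_hom r1 r2 g -> is_hom r1 r3 (f *m g).
Proof. by move=> hf hg a; rewrite -mulmxA hg mulmxA hf mulmxA. Qed.

Lemma hom_scale m1 m2 (r1 : A -> 'M[K]_m1) (r2 : A -> 'M[K]_m2) c (f : 'M[K]_(m2, m1)) :
  is_hom r1 r2 f -> is_hom r1 r2 (c *: f).
Proof. by move=> hf a; rewrite -scalemxAl hf scalemxAr. Qed.

Lemma hom_add m1 m2 (r1 : A -> 'M[K]_m1) (r2 : A -> 'M[K]_m2) (f g : 'M[K]_(m2, m1)) :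
  is_hom r1 r2 f -> is_hom r1 r2 g -> is_hom r1 r2 (f + g).
Proof. by move=> hf hg a; rewrite mulmxDl mulmxDr hf hg. Qed.

Lemma hom0 m1 m2 (r1 : A -> 'M[K]_m1) (r2 : A -> 'M[K]_m2) : is_hom r1 r2 0.
Proof. by move=> a; rewrite mul0mx mulmx0. Qed.

Lemma homsc m (r : A -> 'M[K]_m) c : is_hom r r c%:M.
Proof. by move=> a; rewrite mul_scalar_mx mul_mx_scalar. Qed.

Lemma homE m1 m2 (rho1 : A -> 'M[K]_m1) (rho2 : A -> 'M[K]_m2) a b c d :
  is_hom (dsum_rep rho1 rho2) (dsum_rep rho1 rho2) (block_mx a b c d) <->
  [/\ is_hom rho1 rho1 a, is_hom rho2 rho1 b, is_hom rho1 rho2 c & is_hom rho2 rho2 d].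
Proof.
rewrite /is_hom /dsum_rep; split.
  move=> H; split=> t; have := H t; rewrite !mulmx_block ?mulmx0 ?mul0mx ?addr0 ?add0r;
  by case/eq_block_mx.
by case=> ha hb hc hd t; rewrite !mulmx_block ?mulmx0 ?mul0mx ?addr0 ?add0r ha hb hc hd.
Qed.

Lemma brick_zero m1 m2 (rho1 : A -> 'M[K]_m1) (rho2 : A -> 'M[K]_m2)
  (f : 'M[K]_(m2, m1)) (g : 'M[K]_(m1, m2)) :
  brick rho1 -> brick rho2 -> ~ mod_iso rho1 rho2 ->
  is_hom rho1 rho2 f -> is_hom rho2 rho1 g -> f *m g = 0 /\ g *m f = 0.
Proof.
move=> [_ b1] [_ b2] niso hf hg.
have [->|fn0] := eqVneq f 0; first by rewrite mul0mx mulmx0.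
have [c hc] := b2 _ (hom_comp hf hg).
have [a ha] := b1 _ (hom_comp hg hf).
have ca : c = a.
  have : (f *m g) *m f = f *m (g *m f) by rewrite mulmxA.
  rewrite hc ha mul_scalar_mx mul_mx_scalar => /eqP.
  rewrite -subr_eq0 -scalerBl scaler_eq0 (negPf fn0) orbF subr_eq0.
  by move/eqP.
have [c0|cn0] := eqVneq c 0.
  by rewrite hc ha -ca c0 !raddf0.
exfalso; apply: niso; exists f, (c^-1 *: g); split => //.
- exact: hom_scale.
- by rewrite -scalemxAr hc scale_scalar_mx mulVf.
- by rewrite -scalemxAl ha -ca scale_scalar_mx mulVf.
Qed.

End Aux.

Theorem corollary5p5 (K : closedFieldType) (A : falgType K) (m1 m2 : nat)
  (rho1 : A -> 'M[K]_m1) (rho2 : A -> 'M[K]_m2) :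
  is_rep rho1 -> is_rep rho2 -> brick rho1 -> brick rho2 ->
  ~ mod_iso rho1 rho2 ->
  (symmetric_alg (fun f : 'M[K]_(m1 + m2) =>
                    is_hom (dsum_rep rho1 rho2) (dsum_rep rho1 rho2) f)
   <-> (forall f : 'M[K]_(m2, m1), is_hom rho1 rho2 f -> f = 0) /\
       (forall g : 'M[K]_(m1, m2), is_hom rho2 rho1 g -> g = 0)).
Proof.
move=> _ _ br1 br2 niso.
set D := dsum_rep rho1 rho2.
split.
  move=> [phi [l1 l2 bim inj surj]].
  have phiL z y : is_hom D D z -> is_hom D D y -> phi z y = phi 1%:M (z *m y).
    move=> Hz Hy; have := bim 1%:M 1%:M z y (homsc _ _) (homsc _ _) Hz Hy.
    by rewrite !mul1mx mulmx1.
  have phiR z y : is_hom D D z -> is_hom D D y -> phi z y = phi 1%:M (y *m z).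
    move=> Hz Hy; have := bim z 1%:M 1%:M y Hz (homsc _ _) (homsc _ _) Hy.
    by rewrite !mul1mx !mulmx1.
  have lam0 : phi 1%:M 0 = 0.
    have h := l1 1%:M (homsc _ _) 1 0 0 (hom0 _ _) (hom0 _ _).
    rewrite scale1r addr0 mul1r in h.
    by apply: (addrI (phi 1%:M 0)); rewrite addr0 -h.
  split.
    move=> f hf.
    pose F : 'M[K]_(m1 + m2) := block_mx 0 0 f 0.
    pose e2 : 'M[K]_(m1 + m2) := block_mx 0 0 0 1%:M.
    have HF : is_hom D D F by apply/homE; split; [exact: hom0|exact: hom0|exact: hf|exact: hom0].
    have He2 : is_hom D D e2 by apply/homE; split; [exact: hom0|exact: hom0|exact: hom0|exact: homsc].
    have e2F : e2 *m F = F.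
      by rewrite /e2 /F mulmx_block ?mulmx0 ?mul0mx ?addr0 ?add0r mul1mx.
    have F0 : F = 0.
      apply: (inj F HF) => y Hy; rewrite phiL //.
      have Hy' := Hy; rewrite -(submxK y) in Hy' *.
      case/homE: Hy' => ha hb hc hd.
      have [fb _] := brick_zero br1 br2 niso hf hb.
      have Hw : is_hom D D (F *m block_mx (ulsubmx y) (ursubmx y) (dlsubmx y) (drsubmx y)).
        by apply: hom_comp => //; rewrite submxK.
      rewrite -{1}e2F -mulmxA -(phiL _ _ He2 Hw) (phiR _ _ He2 Hw).
      rewrite /F /e2 !mulmx_block ?mulmx0 ?mul0mx ?addr0 ?add0r mulmx1 fb.
      by rewrite ?mul0mx ?mulmx1 block_mx0.
    by have := congr1 dlsubmx F0; rewrite block_mxKdl => ->; rewrite -block_mx0 block_mxKdl.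
  move=> g hg.
  pose G : 'M[K]_(m1 + m2) := block_mx 0 g 0 0.
  pose e1 : 'M[K]_(m1 + m2) := block_mx 1%:M 0 0 0.
  have HG : is_hom D D G by apply/homE; split; [exact: hom0|exact: hg|exact: hom0|exact: hom0].
  have He1 : is_hom D D e1 by apply/homE; split; [exact: homsc|exact: hom0|exact: hom0|exact: hom0].
  have e1G : e1 *m G = G.
    by rewrite /e1 /G mulmx_block ?mulmx0 ?mul0mx ?addr0 ?add0r mul1mx.
  have G0 : G = 0.
    apply: (inj G HG) => y Hy; rewrite phiL //.
    have Hy' := Hy; rewrite -(submxK y) in Hy' *.
    case/homE: Hy' => ha hb hc hd.
    have [_ gc] := brick_zero br1 br2 niso hc hg.
    have Hw : is_hom D D (G *m block_mx (ulsubmx y) (ursubmx y) (dlsubmx y) (drsubmx y)).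
      by apply: hom_comp => //; rewrite submxK.
    rewrite -{1}e1G -mulmxA -(phiL _ _ He1 Hw) (phiR _ _ He1 Hw).
    rewrite /G /e1 !mulmx_block ?mulmx0 ?mul0mx ?addr0 ?add0r mulmx1 gc.
    by rewrite ?mul0mx ?mulmx1 block_mx0.
  by have := congr1 ursubmx G0; rewrite block_mxKur => ->; rewrite -block_mx0 block_mxKur.
move=> [H12 H21].
have [p1 _] := br1; have [p2 _] := br2.
pose i1 : 'I_(m1 + m2) := lshift m2 (Ordinal p1).
pose j2 : 'I_(m1 + m2) := rshift m1 (Ordinal p2).
pose sd (d1 d2 : K) : 'M[K]_(m1 + m2) := block_mx d1%:M 0 0 d2%:M.
have sdE d1 d2 : is_hom D D (sd d1 d2).
  by apply/homE; split; [exact: homsc|exact: hom0|exact: hom0|exact: homsc].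
have charE y : is_hom D D y -> exists d1 d2, y = sd d1 d2.
  move=> Hy; rewrite -(submxK y) in Hy *.
  case/homE: Hy => ha hb hc hd.
  have [d1 e1] := br1.2 _ ha; have [d2 e2] := br2.2 _ hd.
  by exists d1, d2; rewrite /sd e1 e2 (H12 _ hc) (H21 _ hb).
have sd_i1 d1 d2 : sd d1 d2 i1 i1 = d1.
  by rewrite /sd /i1 block_mxEul mxE eqxx mulr1n.
have sd_j2 d1 d2 : sd d1 d2 j2 j2 = d2.
  by rewrite /sd /j2 block_mxEdr mxE eqxx mulr1n.
have sdM a1 a2 b1 b2 : sd a1 a2 *m sd b1 b2 = sd (a1 * b1) (a2 * b2).
  by rewrite /sd mulmx_block ?mulmx0 ?mul0mx ?addr0 ?add0r -!scalar_mxM.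
have sdD d1 d2 : sd d1 d2 = d1 *: sd 1 0 + (d2 *: sd 0 1 + 0).
  by rewrite /sd addr0 !scale_block_mx add_block_mx !scale_scalar_mx !scaler0
     !mulr1 !mulr0 !raddf0 !addr0 !add0r.
exists (fun x y => x i1 i1 * y i1 i1 + x j2 j2 * y j2 j2); split.
- by move=> x _ c y z _ _; rewrite !mxE; ring.
- by move=> c x y _ _ z _; rewrite !mxE; ring.
- move=> a x b y Ha Hx Hb Hy.
  have [a1 [a2 ->]] := charE _ Ha; have [x1 [x2 ->]] := charE _ Hx.
  have [b1 [b2 ->]] := charE _ Hb; have [y1 [y2 ->]] := charE _ Hy.
  by rewrite !sdM !sd_i1 !sd_j2; ring.
- move=> x Hx; have [c1 [c2 ->]] := charE _ Hx => H.
  have := H _ (sdE 1 0); have := H _ (sdE 0 1).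
  rewrite !sd_i1 !sd_j2 !mulr0 !mulr1 !addr0 !add0r => -> ->.
  have z n : (0 : K)%:M = 0 :> 'M[K]_n by apply/matrixP=> i j; rewrite !mxE mul0rn.
  by rewrite /sd /= !z block_mx0.
move=> f lf.
have f0 : f 0 = 0.
  have h := lf 1 0 0 (hom0 _ _) (hom0 _ _).
  rewrite scale1r addr0 mul1r in h.
  by apply: (addrI (f 0)); rewrite addr0 -h.
exists (sd (f (sd 1 0)) (f (sd 0 1))); first exact: sdE.
move=> y Hy; have [d1 [d2 ->]] := charE _ Hy.
rewrite !sd_i1 !sd_j2 (sdD d1 d2).
rewrite lf ?lf ?f0;
  try (by apply: hom0); try (by apply: sdE);
  try (by apply: hom_add; [apply: hom_scale; exact: sdE|exact: hom0]).
ring.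
Qed.
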